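(* Let $\mathcal{X}\subseteq\mathcal{B}(0,R)$ be compact convex, $\mathcal{Z}$ a set and $f:\mathcal{X}\times\mathcal{Z}\to\mathbb{R}$ with $f(\cdot,z)\in\mathcal{F}^0_{\mathcal{X}}(L)$ for all $z$. Suppose $T\le n$. For sampling-with-replacement SGD $\mathcal{A}_{\sf rSGD}$ with step sizes $(\eta_t)_{t\in[T]}$ and any neighboring datasets $S\simeq S'$, $$\mathbb{E}\big[\|\mathcal{A}_{\sf rSGD}(S)-\mathcal{A}_{\sf rSGD}(S')\|\big]\le\min\Big(2R,\;3L\frac{T-1}{n}\Big(\sqrt{\sum_{t=1}^{T-1}\eta_t^2}+\frac1n\sum_{t=1}^{T-1}\eta_t\Big)\Big).$$
   Context: $\mathcal{F}^0_{\mathcal{X}}(L)$ is the class of convex $L$-Lipschitz functions on $\mathcal{X}$ (Lipschitz on an open set containing $\mathcal{X}$, so subgradients have norm at most $L$). $\mathcal{A}_{\sf rSGD}$ on $S=(z_1,\dots,z_n)$: from a fixed initial point $x^1\in\mathcal{X}$, for $t=1,\dots,T-1$ draw $\mathbf{i}_t\sim\mathrm{Unif}([n])$ independently and set $x^{t+1}=\mathsf{Proj}_{\mathcal{X}}(x^t-\eta_t\nabla f(x^t,z_{\mathbf{i}_t}))$, where $\nabla f(x,z)$ is a fixed selection of a subgradient; output $\frac{1}{\sum_t\eta_t}\sum_{t\in[T]}\eta_tx^t$. The runs on $S$ and $S'$ use the same initial point and the same indices; the expectation is over the indices. $S\simeq S'$ means the datasets differ in at most one entry. *)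

(* Defs.v *)
From HB Require Import structures.
From mathcomp Require Import all_boot all_order all_algebra.
From mathcomp Require Import all_classical all_reals all_analysis.
Set Implicit Arguments. Unset Strict Implicit. Unset Printing Implicit Defensive.
Import Order.TTheory GRing.Theory Num.Theory.
Import numFieldNormedType.Exports.
Local Open Scope ring_scope.
Local Open Scope classical_set_scope.

Section Defs.
Variables (R : realType) (d : nat).
Notation vec := 'rV[R]_d.

Definition dotp (u v : vec) : R := \sum_(i < d) u ord0 i * v ord0 i.
Definition enorm (v : vec) : R := Num.sqrt (\sum_(i < d) v ord0 i ^+ 2).

Definition convex_on (X : set vec) (h : vec -> R) : Prop :=
  forall x y a, X x -> X y -> 0 <= a <= 1 ->
    h (a *: x + (1 - a) *: y) <= a * h x + (1 - a) * h y.

Definition lipschitz_on (U : set vec) (L : R) (h : vec -> R) : Prop :=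
  forall x y, U x -> U y -> `|h x - h y| <= L * enorm (x - y).

(* h belongs to F^0_X(L): convex on X, L-Lipschitz on an open set containing X. *)
Definition convex_lip_class (X : set vec) (L : R) (h : vec -> R) : Prop :=
  convex_on X h /\ exists U : set vec, [/\ open U, X `<=` U & lipschitz_on U L h].

Definition is_subgrad (X : set vec) (L : R) (h : vec -> R) (x gx : vec) : Prop :=
  (forall y, X y -> h x + dotp gx (y - x) <= h y) /\ enorm gx <= L.

Definition is_proj (X : set vec) (p : vec -> vec) : Prop :=
  forall v, X (p v) /\ forall y, X y -> enorm (v - p v) <= enorm (v - y).

(* Iterates of rSGD: rsgd_x k is x^{k+1} in the paper's 1-based notation.
   Step k (0-based, k < m = T-1) uses eta (k+1) and sample S (I k). *)
Fixpoint rsgd_x (Z : Type) (n m : nat) (proj : vec -> vec) (g : Z -> vec -> vec)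
    (S : 'I_n -> Z) (eta : nat -> R) (x1 : vec) (I : {ffun 'I_m -> 'I_n}) (k : nat)
    : vec :=
  match k with
  | 0 => x1
  | k'.+1 =>
      let x := rsgd_x proj g S eta x1 I k' in
      match (insub k' : option 'I_m) with
      | Some j => proj (x - eta k *: g (S (I j)) x)
      | None => x
      end
  end.

Definition rsgd_out (Z : Type) (n T : nat) (proj : vec -> vec) (g : Z -> vec -> vec)
    (S : 'I_n -> Z) (eta : nat -> R) (x1 : vec) (I : {ffun 'I_T.-1 -> 'I_n}) : vec :=
  (\sum_(k < T) eta k.+1)^-1 *: \sum_(k < T) eta k.+1 *: rsgd_x proj g S eta x1 I k.

(* Expectation over i.i.d. uniform indices i_1..i_{T-1} in [n]. *)
Definition expect_idx (n m : nat) (F : {ffun 'I_m -> 'I_n} -> R) : R :=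
  (\sum_(I : {ffun 'I_m -> 'I_n}) F I) / (n%:R ^+ m).

End Defs.

Definition neighboring (Z : Type) (n : nat) (S S' : 'I_n -> Z) : Prop :=
  exists j : 'I_n, forall i, i != j -> S i = S' i.

(* Main.v *)
Require Import Defs.
From HB Require Import structures.
From mathcomp Require Import all_boot all_order all_algebra.
From mathcomp Require Import all_classical all_reals all_analysis.
From mathcomp Require Import ring lra.
Import Order.TTheory GRing.Theory Num.Theory.
Import numFieldNormedType.Exports.
Local Open Scope ring_scope.
Local Open Scope classical_set_scope.
Set Implicit Arguments. Unset Strict Implicit.

Section Vec.
Variables (R : realType) (d : nat).
Notation vec := 'rV[R]_d.
Implicit Types u v w : vec.

Lemma dotpC u v : dotp u v = dotp v u.
Proof. by apply: eq_bigr => i _; rewrite mulrC. Qed.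

Lemma dotpDl u v w : dotp (u + v) w = dotp u w + dotp v w.
Proof. by rewrite /dotp -big_split; apply: eq_bigr => i _; rewrite !mxE mulrDl. Qed.

Lemma dotpZl (a : R) u v : dotp (a *: u) v = a * dotp u v.
Proof. by rewrite /dotp mulr_sumr; apply: eq_bigr => i _; rewrite !mxE mulrA. Qed.

Lemma dotpNl u v : dotp (- u) v = - dotp u v.
Proof. by rewrite -scaleN1r dotpZl mulN1r. Qed.

Lemma dotpBl u v w : dotp (u - v) w = dotp u w - dotp v w.
Proof. by rewrite dotpDl dotpNl. Qed.

Lemma dotpDr u v w : dotp w (u + v) = dotp w u + dotp w v.
Proof. by rewrite dotpC dotpDl !(dotpC w). Qed.

Lemma dotpBr u v w : dotp w (u - v) = dotp w u - dotp w v.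
Proof. by rewrite dotpC dotpBl !(dotpC w). Qed.

Lemma dotpZr (a : R) u v : dotp v (a *: u) = a * dotp v u.
Proof. by rewrite dotpC dotpZl dotpC. Qed.

Lemma dotp_ge0 v : 0 <= dotp v v.
Proof. by apply: sumr_ge0 => i _; rewrite -expr2 sqr_ge0. Qed.

Lemma enormE v : enorm v = Num.sqrt (dotp v v).
Proof. by rewrite /enorm /dotp; congr Num.sqrt; apply: eq_bigr => i _; rewrite expr2. Qed.

Lemma enorm_ge0 v : 0 <= enorm v.
Proof. by rewrite /enorm sqrtr_ge0. Qed.

Lemma enorm_sq v : enorm v ^+ 2 = dotp v v.
Proof. by rewrite enormE sqr_sqrtr // dotp_ge0. Qed.

Lemma dotp0 v : dotp v v = 0 -> forall w, dotp v w = 0.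
Proof.
move=> h w; have: forall i, v ord0 i * v ord0 i = 0.
  move=> i; move/psumr_eq0P: h => h; apply: h => // j _; by rewrite -expr2 sqr_ge0.
move=> hi; rewrite /dotp big1 // => i _.
by move/eqP: (hi i); rewrite mulf_eq0 orbb => /eqP ->; rewrite mul0r.
Qed.

Lemma CS u v : dotp u v <= enorm u * enorm v.
Proof.
have [h0|hpos] := eqVneq (dotp v v) 0.
  by rewrite dotpC (dotp0 h0) mulr_ge0 // enorm_ge0.
have vpos : 0 < dotp v v by rewrite lt_neqAle eq_sym hpos dotp_ge0.
set t := dotp u v / dotp v v.
have H := dotp_ge0 (u - t *: v).
rewrite !dotpBl !dotpBr !dotpZl !dotpZr (dotpC v u) in H.
have : dotp u v ^+ 2 <= dotp u u * dotp v v.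
  have e : dotp u u - t * dotp u v - (t * dotp u v - t * (t * dotp v v))
       = dotp u u - dotp u v ^+2 / dotp v v.
    rewrite /t; field; by rewrite hpos.
  rewrite e subr_ge0 ler_pdivrMr // in H; exact: H.
move=> h2.
have : `|dotp u v| <= enorm u * enorm v.
  rewrite -sqrtr_sqr !enormE -sqrtrM ?dotp_ge0 //.
  by rewrite ler_sqrt // mulr_ge0 // dotp_ge0.
apply: le_trans; exact: ler_norm.
Qed.

Lemma enorm_triangle u v : enorm (u + v) <= enorm u + enorm v.
Proof.
rewrite -(ler_pXn2r (n:=2)) //; last first.
- by rewrite nnegrE addr_ge0 // enorm_ge0.
- by rewrite nnegrE enorm_ge0.
rewrite enorm_sq dotpDl !dotpDr (dotpC v u) sqrrD !enorm_sq.
have := CS u v; lra.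
Qed.

Lemma enormZ (a : R) v : enorm (a *: v) = `|a| * enorm v.
Proof.
by rewrite !enormE dotpZl dotpZr mulrA -expr2 sqrtrM ?sqr_ge0 // sqrtr_sqr.
Qed.

Lemma enormN v : enorm (- v) = enorm v.
Proof. by rewrite -scaleN1r enormZ normrN normr1 mul1r. Qed.

Lemma enorm0 : enorm (0 : vec) = 0.
Proof. by rewrite -(scale0r 0) enormZ normr0 mul0r. Qed.

Lemma enormB u v : enorm (u - v) <= enorm u + enorm v.
Proof. by rewrite -(enormN v) enorm_triangle. Qed.

Lemma enorm_sum (I : finType) (F : I -> vec) :
  enorm (\sum_i F i) <= \sum_i enorm (F i).
Proof.
elim/big_ind2: _ => //; first by rewrite enorm0.
move=> x1 x2 y1 y2 h1 h2; apply: le_trans (enorm_triangle _ _) _; exact: lerD.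
Qed.

Lemma dotp_subZ (e : R) u v : dotp (u - e *: v) (u - e *: v)
  = dotp u u - 2 * e * dotp u v + e ^+ 2 * dotp v v.
Proof. rewrite !dotpBl !dotpBr !dotpZl !dotpZr (dotpC v u); ring. Qed.

End Vec.
Section P.
Variables (R : realType) (d : nat).
Notation vec := 'rV[R]_d.
Implicit Types u v w : vec.

Lemma conv_in (X : set vec) (y p : vec) (s : R) :
  convex_set (X : set (convex_lmodType vec)) -> X y -> X p -> 0 <= s <= 1 ->
  X (s *: y + (1 - s) *: p).
Proof.
move=> hc hy hp /andP[s0 s1].
have hs : Itv.num_sem (Interval (BLeft 0%Z) (BRight 1%Z)) s.
  by rewrite /Itv.num_sem /= in_itv /= s0 s1 /= ger0_real.
have := hc y p (@Itv.mk _ _ (Itv.Real _) s hs); rewrite !inE; apply => //.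
Qed.

Lemma proj_var (X : set vec) proj v y :
  convex_set (X : set (convex_lmodType vec)) -> is_proj X proj -> X y ->
  dotp (v - proj v) (y - proj v) <= 0.
Proof.
move=> hc hp hy; have [hXp hmin] := hp v.
set p := proj v in hXp hmin *.
set c := dotp (v - p) (y - p).
set q := dotp (y - p) (y - p).
have q0 : 0 <= q by exact: dotp_ge0.
have key : forall s, 0 <= s <= 1 -> 2 * s * c <= s ^+ 2 * q.
  move=> s hs; have := hmin _ (conv_in hc hy hXp hs).
  have -> : v - (s *: y + (1 - s) *: p) = (v - p) - s *: (y - p).
    by apply/rowP => i; rewrite !mxE; ring.
  rewrite !enormE ler_sqrt ?dotp_ge0 //.
  have gen : forall a b : vec, dotp (a - s *: b) (a - s *: b)
      = dotp a a - 2 * s * dotp a b + s ^+ 2 * dotp b b.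
    move=> a b; rewrite !dotpBl !dotpBr !dotpZl !dotpZr (dotpC b a); ring.
  rewrite gen -/c -/q.
  move=> h; nra.
rewrite leNgt; apply/negP => cpos.
have cq : 0 < c + q by lra.
set s := c / (c + q).
have s0 : 0 < s by rewrite divr_gt0.
have s1 : s <= 1 by rewrite ler_pdivrMr // mul1r; lra.
have := key s; rewrite (ltW s0) s1 => /(_ isT).
have e : s ^+ 2 * q = s * (s * q) by rewrite expr2 mulrA.
rewrite e => h.
have sq : s * q < c.
  rewrite /s mulrAC ltr_pdivrMr //; nra.
nra.
Qed.

Lemma proj_nonexp (X : set vec) proj u v :
  convex_set (X : set (convex_lmodType vec)) -> is_proj X proj ->
  enorm (proj u - proj v) <= enorm (u - v).
Proof.
move=> hc hp.
have c1 := proj_var u hc hp (proj1 (hp v)).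
have c2 := proj_var v hc hp (proj1 (hp u)).
set p := proj u in c1 c2 *; set q := proj v in c1 c2 *.
have e : dotp (u - v) (p - q) = dotp (p - q) (p - q) - dotp (u - p) (q - p)
   - dotp (v - q) (p - q).
  have -> : u - v = (u - p) - (v - q) + (p - q) by apply/rowP => i; rewrite !mxE; ring.
  have -> : q - p = - (p - q) by rewrite opprB.
  have dN : forall a b : vec, dotp a (- b) = - dotp a b.
    by move=> a b; rewrite dotpC dotpNl dotpC.
  rewrite dotpDl dotpBl dN; ring.
have h1 : dotp (p - q) (p - q) <= dotp (u - v) (p - q) by lra.
have h2 := CS (u - v) (p - q).
have a0 := enorm_ge0 (p - q); have b0 := enorm_ge0 (u - v).
rewrite -enorm_sq in h1.
nra.
Qed.
End P.

Section Dyn.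
Variables (R : realType) (d : nat).
Notation vec := 'rV[R]_d.
Variables (X : set vec) (Z : Type) (f : vec -> Z -> R) (L : R)
  (g : Z -> vec -> vec) (proj : vec -> vec) (n m : nat) (eta : nat -> R)
  (x1 : vec) (S S' : 'I_n -> Z) (j : 'I_n) (I : {ffun 'I_m -> 'I_n}).
Hypothesis hconv : convex_set (X : set (convex_lmodType vec)).
Hypothesis hsub : forall z x, X x -> is_subgrad X L (fun y => f y z) x (g z x).
Hypothesis hproj : is_proj X proj.
Hypothesis hx1 : X x1.
Hypothesis heta : forall k, (k < m)%N -> 0 < eta k.+1.
Hypothesis hnb : forall i, i != j -> S i = S' i.
Hypothesis L0 : 0 <= L.

Let x k := rsgd_x proj g S eta x1 I k.
Let x' k := rsgd_x proj g S' eta x1 I k.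

Lemma rsgd_step (SS : 'I_n -> Z) k (hk : (k < m)%N) :
  rsgd_x proj g SS eta x1 I k.+1 =
  proj (rsgd_x proj g SS eta x1 I k - eta k.+1 *: g (SS (I (Ordinal hk))) (rsgd_x proj g SS eta x1 I k)).
Proof. by rewrite /= insubT. Qed.

Lemma rsgd_in (SS : 'I_n -> Z) k : X (rsgd_x proj g SS eta x1 I k).
Proof.
elim: k => [|k IH] //=.
by case: insubP => [i _ _|_] //; exact: (proj1 (hproj _)).
Qed.

Lemma mono z u v : X u -> X v -> 0 <= dotp (g z u - g z v) (u - v).
Proof.
move=> hu hv; have [h1 _] := hsub z hu; have [h2 _] := hsub z hv.
have a := h1 v hv; have b := h2 u hu.
have e : dotp (g z u) (v - u) = - dotp (g z u) (u - v).
  have -> : v - u = - (u - v) by rewrite opprB.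
  by rewrite dotpC dotpNl dotpC.
rewrite dotpBl; lra.
Qed.

Lemma gnorm z u : X u -> enorm (g z u) <= L.
Proof. by move=> hu; case: (hsub z hu). Qed.

Lemma same_step z u v (e : R) : X u -> X v -> 0 <= e ->
  enorm ((u - e *: g z u) - (v - e *: g z v)) ^+ 2 <=
  enorm (u - v) ^+ 2 + 4 * L ^+ 2 * e ^+ 2.
Proof.
move=> hu hv e0.
have -> : (u - e *: g z u) - (v - e *: g z v) = (u - v) - e *: (g z u - g z v).
  by apply/rowP => i; rewrite !mxE; ring.
set D := u - v; set G := g z u - g z v.
have hm : 0 <= dotp G D by exact: mono.
have hG : enorm G <= 2 * L.
  apply: le_trans (enormB _ _) _; have := gnorm z hu; have := gnorm z hv; lra.
have G0 := enorm_ge0 G.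
rewrite !enorm_sq dotp_subZ (dotpC D G).
have : dotp G G <= 4 * L ^+ 2.
  rewrite -enorm_sq; nra.
nra.
Qed.

Lemma diff_step z z' u v (e : R) : X u -> X v -> 0 <= e ->
  enorm ((u - e *: g z u) - (v - e *: g z' v)) <= enorm (u - v) + 2 * L * e.
Proof.
move=> hu hv e0.
have -> : (u - e *: g z u) - (v - e *: g z' v) = (u - v) - e *: (g z u - g z' v).
  by apply/rowP => i; rewrite !mxE; ring.
apply: le_trans (enormB _ _) _; rewrite enormZ ger0_norm //.
have : enorm (g z u - g z' v) <= 2 * L.
  apply: le_trans (enormB _ _) _; have := gnorm z hu; have := gnorm z' hv; lra.
nra.
Qed.

Definition hitn (s : 'I_m) : nat := (I s == j).
Definition Nn k : nat := \sum_(s < m | (s < k)%N) hitn s.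
Definition Qk k : R := \sum_(s < m | (s < k)%N) eta s.+1 ^+ 2.
Definition Bk k : R := \sum_(s < m | (s < k)%N) (hitn s)%:R * (Nn s)%:R * eta s.+1.
Definition Bnd k := 2 * L * (Num.sqrt (Qk k) * (Nn k)%:R + Bk k).

Lemma sumR_split (F : 'I_m -> R) k (hk : (k < m)%N) :
  \sum_(s < m | (s < k.+1)%N) F s = \sum_(s < m | (s < k)%N) F s + F (Ordinal hk).
Proof.
rewrite (bigD1 (Ordinal hk)) //= addrC; congr (_ + _); apply: eq_bigl => s.
by rewrite ltnS -(inj_eq val_inj) /= [in RHS]ltn_neqAle andbC.
Qed.

Lemma sumN_split (F : 'I_m -> nat) k (hk : (k < m)%N) :
  (\sum_(s < m | (s < k.+1)%N) F s = \sum_(s < m | (s < k)%N) F s + F (Ordinal hk))%N.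
Proof.
rewrite (bigD1 (Ordinal hk)) //= addnC; congr (_ + _)%N; apply: eq_bigl => s.
by rewrite ltnS -(inj_eq val_inj) /= [in RHS]ltn_neqAle andbC.
Qed.

Lemma Qk_ge0 k : 0 <= Qk k.
Proof. by apply: sumr_ge0 => s _; rewrite sqr_ge0. Qed.

Lemma Bk_ge0 k : 0 <= Bk k.
Proof.
apply: sumr_ge0 => s _; rewrite mulr_ge0 // ?mulr_ge0 // ltW //; exact: heta.
Qed.

Lemma Bnd_ge0 k : 0 <= Bnd k.
Proof.
rewrite /Bnd mulr_ge0 ?mulr_ge0 // ?addr_ge0 ?mulr_ge0 ?sqrtr_ge0 ?Bk_ge0 //.
Qed.


Lemma invariant k : (k <= m)%N ->
  (Nn k = 0%N -> x k = x' k) /\ enorm (x k - x' k) <= Bnd k.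
Proof.
elim: k => [_|k IH hk].
  split => //; rewrite /x /x' /= subrr enorm0; exact: Bnd_ge0.
have hk' : (k < m)%N by [].
have [IH1 IH2] := IH (ltnW hk').
set s0 := Ordinal hk'.
rewrite /x /x' !(rsgd_step _ hk') -/(x k) -/(x' k) -/s0.
have hQ : Qk k.+1 = Qk k + eta k.+1 ^+ 2 by rewrite /Qk sumR_split.
have hN : Nn k.+1 = (Nn k + hitn s0)%N by rewrite /Nn sumN_split.
have hB : Bk k.+1 = Bk k + (hitn s0)%:R * (Nn k)%:R * eta k.+1 by rewrite /Bk sumR_split.
have e0 : 0 < eta k.+1 by exact: heta.
set a := Num.sqrt (Qk k); set a' := Num.sqrt (Qk k.+1).
have a0 : 0 <= a by exact: sqrtr_ge0.
have aa' : a <= a' by rewrite ler_sqrt ?Qk_ge0 // hQ lerDl sqr_ge0.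
have ea' : eta k.+1 <= a'.
  rewrite -(ger0_norm (ltW e0)) -sqrtr_sqr ler_sqrt ?Qk_ge0 // hQ lerDr Qk_ge0 //.
have sa : a ^+ 2 = Qk k by rewrite sqr_sqrtr // Qk_ge0.
have sa' : a' ^+ 2 = Qk k + eta k.+1 ^+ 2 by rewrite sqr_sqrtr ?Qk_ge0 // hQ.
have B0 := Bk_ge0 k.
have d0 := enorm_ge0 (x k - x' k).
rewrite /Bnd hN hB -/a'; rewrite /Bnd -/a in IH2.
have hXk := rsgd_in S k; have hXk' := rsgd_in S' k.
rewrite -/(x k) in hXk; rewrite -/(x' k) in hXk'.
rewrite /hitn /= in hN *.
case hj: (I s0 == j) => /=.
- split; first by rewrite addn1.
  apply: le_trans (proj_nonexp _ _ hconv hproj) _.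
  apply: le_trans (diff_step _ _ hXk hXk' (ltW e0)) _.
  rewrite natrD mul1r.
  set N := (Nn k)%:R.
  have N0 : 0 <= N by exact: ler0n.
  have h1 : a * N <= a' * N by rewrite ler_wpM2r.
  have h2 : 2 * L * (a * N + Bk k) + 2 * L * eta k.+1 <=
            2 * L * (a' * (N + 1) + (Bk k + N * eta k.+1)).
    rewrite -mulrDr ler_wpM2l ?mulr_ge0 //.
    have : 0 <= N * eta k.+1 by rewrite mulr_ge0 // ltW.
    lra.
  lra.
- have hS : S (I s0) = S' (I s0) by apply: hnb; rewrite hj.
  rewrite hS addn0 in hN *.
  have [Nz|Nnz] := eqVneq (Nn k) 0%N.
    have exx := IH1 Nz; rewrite exx; split => //.
    rewrite subrr enorm0 mul0r mul0r addr0.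
    rewrite mulr_ge0 ?mulr_ge0 // ?addr_ge0 ?mulr_ge0 ?sqrtr_ge0 //.
  split; first by move=> h; rewrite h eqxx in Nnz.
  apply: le_trans (proj_nonexp _ _ hconv hproj) _.
  set y := enorm _.
  have y0 : 0 <= y by exact: enorm_ge0.
  have hy := same_step (S' (I s0)) hXk hXk' (ltW e0).
  rewrite -/y in hy.
  set N := (Nn k)%:R.
  have N1 : 1 <= N by rewrite /N ler1n lt0n.
  rewrite mul0r mul0r addr0.
  set c := 2 * L * (a' * N + Bk k).
  have c0 : 0 <= c by rewrite /c mulr_ge0 ?mulr_ge0 // addr_ge0 // mulr_ge0 //; lra.
  rewrite -(ler_pXn2r (n:=2)) ?nnegrE //.
  apply: le_trans hy _.
  have hd2 : enorm (x k - x' k) ^+ 2 <= (2 * L * (a * N + Bk k)) ^+ 2.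
    rewrite ler_pXn2r ?nnegrE //.
    rewrite mulr_ge0 ?mulr_ge0 // addr_ge0 // mulr_ge0 //; lra.
  have key : (a * N + Bk k) ^+ 2 + eta k.+1 ^+ 2 <= (a' * N + Bk k) ^+ 2.
    have hNN : 1 <= N ^+ 2 by rewrite expr_ge1 //; lra.
    have t1 : (a' * N) ^+ 2 = a ^+ 2 * N ^+ 2 + eta k.+1 ^+ 2 * N ^+ 2.
      by rewrite exprMn sa' sa mulrDl.
    have t2 : a * N * Bk k <= a' * N * Bk k.
      by rewrite ler_wpM2r // ler_wpM2r //; lra.
    have t3 : eta k.+1 ^+ 2 <= eta k.+1 ^+ 2 * N ^+ 2.
      by rewrite -{1}(mulr1 (eta k.+1 ^+ 2)) ler_wpM2l // sqr_ge0.
    rewrite !sqrrD t1 exprMn; nra.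
  rewrite /c !exprMn.
  have L2 : 0 <= (2 * L) ^+ 2 by rewrite sqr_ge0.
  rewrite exprMn in hd2.
  have : (2 * L) ^+ 2 * ((a * N + Bk k) ^+ 2 + eta k.+1 ^+ 2) <=
         (2 * L) ^+ 2 * (a' * N + Bk k) ^+ 2 by rewrite ler_wpM2l.
  rewrite exprMn; nra.
Qed.


Lemma sum_pred_mono (F : 'I_m -> R) k k' : (k <= k')%N -> (forall s, 0 <= F s) ->
  \sum_(s < m | (s < k)%N) F s <= \sum_(s < m | (s < k')%N) F s.
Proof.
move=> kk F0; rewrite [X in _ <= X](bigID (fun s : 'I_m => (s < k)%N)) /=.
have -> : \sum_(i < m | (i < k')%N && (i < k)%N) F i = \sum_(s < m | (s < k)%N) F s.
  apply: eq_bigl => s; case h: (s < k)%N; rewrite ?andbF ?andbT //.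
  exact: leq_trans h kk.
by rewrite lerDl sumr_ge0.
Qed.

Lemma NnR k : (Nn k)%:R = \sum_(s < m | (s < k)%N) ((hitn s)%:R : R).
Proof. by rewrite /Nn natr_sum. Qed.

Lemma Bnd_mono k : (k <= m)%N -> Bnd k <= Bnd m.
Proof.
move=> km; rewrite /Bnd ler_wpM2l ?mulr_ge0 //.
apply: lerD; last first.
  apply: sum_pred_mono => // s; rewrite mulr_ge0 ?mulr_ge0 // ltW //; exact: heta.
apply: le_trans (_ : Num.sqrt (Qk k) * (Nn m)%:R <= _).
  rewrite ler_wpM2l ?sqrtr_ge0 // !NnR; exact: sum_pred_mono.
rewrite ler_wpM2r // ler_sqrt ?Qk_ge0 //; apply: sum_pred_mono => // s.
exact: sqr_ge0.
Qed.

Lemma bound_iter k : (k <= m)%N -> enorm (x k - x' k) <= Bnd m.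
Proof. move=> km; apply: le_trans (Bnd_mono km); exact: (proj2 (invariant km)). Qed.

End Dyn.

Lemma wavg_bound (R : realType) (d T : nat) (w : 'I_T -> R) (y : 'I_T -> 'rV[R]_d) (b : R) :
  (forall k, 0 <= w k) -> (forall k, enorm (y k) <= b) -> 0 <= b ->
  enorm ((\sum_(k < T) w k)^-1 *: \sum_(k < T) w k *: y k) <= b.
Proof.
move=> w0 yb b0; rewrite enormZ.
have W0 : 0 <= \sum_(k < T) w k by exact: sumr_ge0.
rewrite ger0_norm ?invr_ge0 //.
have h : enorm (\sum_(k < T) w k *: y k) <= (\sum_(k < T) w k) * b.
  apply: le_trans (enorm_sum _) _; rewrite mulr_suml; apply: ler_sum => k _.
  by rewrite enormZ ger0_norm // ler_wpM2l.
have [->|Wn] := eqVneq (\sum_(k < T) w k) 0; first by rewrite invr0 mul0r.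
apply: le_trans (_ : _ <= (\sum_(k < T) w k)^-1 * ((\sum_(k < T) w k) * b)) _.
  by rewrite ler_wpM2l ?invr_ge0.
by rewrite mulKf.
Qed.


Section Count.
Variables (R : realType) (n m : nat) (j : 'I_n).
Definition hitR (I : {ffun 'I_m -> 'I_n}) (s : 'I_m) : R := ((I s == j) : nat)%:R.

Lemma sum_hit1 : \sum_(v < n) (((v == j) : nat)%:R : R) = 1.
Proof.
rewrite (bigD1 j) //= eqxx big1 ?addr0 // => v /negbTE -> //.
Qed.

Lemma prod_nm : \prod_(k < m) (n%:R : R) = n%:R ^+ m.
Proof. by rewrite prodr_const card_ord. Qed.

Lemma count1 s : \sum_(I : {ffun 'I_m -> 'I_n}) hitR I s * n%:R = n%:R ^+ m.
Proof.
pose F (k : 'I_m) (v : 'I_n) : R := if k == s then (((v == j) : nat)%:R * n%:R) else 1.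
have e1 : forall I : {ffun 'I_m -> 'I_n}, hitR I s * n%:R = \prod_k F k (I k).
  move=> I; rewrite (bigD1 s) //= /F eqxx big1 ?mulr1 // => k /negbTE -> //.
rewrite (eq_bigr _ (fun I _ => e1 I)) -bigA_distr_bigA -prod_nm.
apply: eq_bigr => k _; rewrite /F; case: eqP => _.
  by rewrite -mulr_suml sum_hit1 mul1r.
by rewrite sumr_const card_ord.
Qed.

Lemma count2 r s : r != s ->
  \sum_(I : {ffun 'I_m -> 'I_n}) hitR I r * hitR I s * (n%:R * n%:R) = n%:R ^+ m.
Proof.
move=> rs.
pose F (k : 'I_m) (v : 'I_n) : R :=
  if k == r then (((v == j) : nat)%:R * n%:R)
  else if k == s then (((v == j) : nat)%:R * n%:R) else 1.
have e1 : forall I : {ffun 'I_m -> 'I_n},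
    hitR I r * hitR I s * (n%:R * n%:R) = \prod_k F k (I k).
  move=> I; rewrite (bigD1 r) //= (bigD1 s) /=; last by rewrite eq_sym.
  have sr : s != r by rewrite eq_sym.
  rewrite /F eqxx (negbTE sr) eqxx big1 ?mulr1.
    by rewrite /hitR; ring.
  by move=> k /andP[/negbTE -> /negbTE ->].
rewrite (eq_bigr _ (fun I _ => e1 I)) -bigA_distr_bigA -prod_nm.
apply: eq_bigr => k _; rewrite /F; case: eqP => _.
  by rewrite -mulr_suml sum_hit1 mul1r.
case: eqP => _.
  by rewrite -mulr_suml sum_hit1 mul1r.
by rewrite sumr_const card_ord.
Qed.
End Count.
Arguments hitR {R n m}.
Unset Implicit Arguments.

Theorem theoremA1 (R : realType) (d : nat) (X : set 'rV[R]_d) (Rad : R)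
  (Z : Type) (f : 'rV[R]_d -> Z -> R) (L : R)
  (g : Z -> 'rV[R]_d -> 'rV[R]_d) (proj : 'rV[R]_d -> 'rV[R]_d)
  (n T : nat) (eta : nat -> R) (x1 : 'rV[R]_d) (S S' : 'I_n -> Z) :
  compact X -> convex_set X -> (forall x, X x -> enorm x <= Rad) ->
  (forall z, convex_lip_class X L (fun x => f x z)) ->
  (forall z x, X x -> is_subgrad X L (fun y => f y z) x (g z x)) ->
  is_proj X proj ->
  X x1 ->
  (1 <= T)%N -> (T <= n)%N ->
  (forall t, (1 <= t <= T)%N -> 0 < eta t) ->
  neighboring S S' ->
  expect_idx (fun I : {ffun 'I_T.-1 -> 'I_n} =>
      enorm (rsgd_out proj g S eta x1 I - rsgd_out proj g S' eta x1 I))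
  <= Num.min (2 * Rad)
       (3 * L * ((T.-1)%:R / n%:R) *
         (Num.sqrt (\sum_(1 <= t < T) eta t ^+ 2) + n%:R^-1 * \sum_(1 <= t < T) eta t)).
Proof.
move=> hcomp hconv hR hcl hsub hproj hx1 hT1 hTn heta [j hnb].
case: T hT1 hTn heta => [//|m] _ hmn heta /=.
have hn : (0 < n)%N by apply: leq_trans hmn.
have n0 : 0 < (n%:R : R) by rewrite ltr0n.
have L0 : 0 <= L.
  by have [_ hL] := hsub (S j) x1 hx1; apply: le_trans hL; exact: enorm_ge0.
have heta' : forall k, (k < m)%N -> 0 < eta k.+1.
  by move=> k hk; apply: heta; rewrite /= ltnS ltnW.
have heta0 : forall k : 'I_m.+1, 0 <= eta k.+1.
  by move=> k; apply/ltW/heta; rewrite /= ltn_ord.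
have Rad0 : 0 <= Rad by apply: le_trans (hR _ hx1); exact: enorm_ge0.
have diffE : forall I : {ffun 'I_m.+1.-1 -> 'I_n},
    rsgd_out proj g S eta x1 I - rsgd_out proj g S' eta x1 I =
    (\sum_(k < m.+1) eta k.+1)^-1 *: \sum_(k < m.+1) eta k.+1 *:
      (rsgd_x proj g S eta x1 I k - rsgd_x proj g S' eta x1 I k).
  move=> I; rewrite /rsgd_out -scalerBr -sumrB; congr (_ *: _).
  by apply: eq_bigr => k _; rewrite scalerBr.
have hI2 : forall I : {ffun 'I_m.+1.-1 -> 'I_n},
    enorm (rsgd_out proj g S eta x1 I - rsgd_out proj g S' eta x1 I) <= Bnd L eta j I m.
  move=> I; rewrite diffE; apply: wavg_bound => //.
  - move=> k /=; apply: (bound_iter I hconv hsub hproj hx1 heta' hnb L0).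
    by rewrite -ltnS ltn_ord.
  - exact: Bnd_ge0.
have hI1 : forall I : {ffun 'I_m.+1.-1 -> 'I_n},
    enorm (rsgd_out proj g S eta x1 I - rsgd_out proj g S' eta x1 I) <= 2 * Rad.
  move=> I.
  have h : forall SS, enorm (rsgd_out proj g SS eta x1 I) <= Rad.
    move=> SS; apply: wavg_bound => // k; apply: hR; exact: rsgd_in.
  have := h S; have := h S'.
  have := enormB (rsgd_out proj g S eta x1 I) (rsgd_out proj g S' eta x1 I); lra.
have P0 : 0 < (n%:R : R) ^+ m by rewrite exprn_gt0.
rewrite /expect_idx le_min; apply/andP; split.
  rewrite ler_pdivrMr //.
  apply: le_trans (ler_sum _ (fun I _ => hI1 I)) _.
  by rewrite sumr_const card_ffun !card_ord -natrX mulr_natr.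
rewrite ler_pdivrMr //.
apply: le_trans (ler_sum _ (fun I _ => hI2 I)) _.
set a := Num.sqrt (Qk m eta m).
have eQ : Qk m eta m = \sum_(1 <= t < m.+1) eta t ^+ 2.
  rewrite /Qk big_add1 /= big_mkord; apply: eq_bigl => s; exact: ltn_ord.
have eE : \sum_(1 <= t < m.+1) eta t = \sum_(s < m) eta s.+1.
  by rewrite big_add1 /= big_mkord.
have eN : forall I : {ffun 'I_m -> 'I_n}, ((Nn j I m)%:R : R) = \sum_(s < m) hitR (R:=R) j I s.
  by move=> I; rewrite NnR; apply: eq_bigl => s; exact: ltn_ord.
have eB : forall I : {ffun 'I_m -> 'I_n}, Bk eta j I m =
    \sum_(s < m) hitR (R:=R) j I s * (\sum_(r < m | (r < s)%N) hitR (R:=R) j I r) * eta s.+1.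
  move=> I; rewrite /Bk (eq_bigl (fun _ => true)); last by move=> s; exact: ltn_ord.
  by apply: eq_bigr => s _; rewrite NnR.
have c1 : forall s : 'I_m, \sum_(I : {ffun 'I_m -> 'I_n}) hitR (R:=R) j I s = n%:R ^+ m / n%:R.
  move=> s; rewrite -(count1 R j s) -mulr_suml mulfK //; lra.
have c2 : forall r s : 'I_m, r != s ->
    \sum_(I : {ffun 'I_m -> 'I_n}) hitR (R:=R) j I r * hitR (R:=R) j I s = n%:R ^+ m / (n%:R * n%:R).
  move=> r s rs; rewrite -(count2 R j rs) -mulr_suml mulfK //.
  by rewrite mulf_neq0 //; lra.
have hit0 : forall (I : {ffun 'I_m -> 'I_n}) s, 0 <= hitR (R:=R) j I s by move=> I s; exact: ler0n.
have S1 : \sum_(I : {ffun 'I_m -> 'I_n}) \sum_(s < m) hitR (R:=R) j I s = m%:R * (n%:R ^+ m / n%:R).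
  rewrite exchange_big /=; under eq_bigr do rewrite c1.
  by rewrite sumr_const card_ord mulr_natl.
have S2 : \sum_(I : {ffun 'I_m -> 'I_n}) \sum_(s < m)
     hitR (R:=R) j I s * (\sum_(r < m | (r < s)%N) hitR (R:=R) j I r) * eta s.+1
    <= m%:R * (n%:R ^+ m / (n%:R * n%:R)) * \sum_(s < m) eta s.+1.
  rewrite exchange_big /= mulr_sumr; apply: ler_sum => s _.
  have inner : \sum_(I : {ffun 'I_m -> 'I_n})
       hitR (R:=R) j I s * (\sum_(r < m | (r < s)%N) hitR (R:=R) j I r) * eta s.+1
     = (\sum_(r < m | (r < s)%N) \sum_(I : {ffun 'I_m -> 'I_n}) hitR (R:=R) j I r * hitR (R:=R) j I s) * eta s.+1.
    rewrite -mulr_suml; congr (_ * _).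
    under eq_bigr do rewrite mulr_sumr.
    rewrite exchange_big /=; apply: eq_bigr => r _; apply: eq_bigr => I _; exact: mulrC.
  rewrite inner.
  set c := n%:R ^+ m / (n%:R * n%:R).
  have -> : \sum_(r < m | (r < s)%N) \sum_(I : {ffun 'I_m -> 'I_n}) hitR (R:=R) j I r * hitR (R:=R) j I s
      = \sum_(r < m | (r < s)%N) c.
    apply: eq_bigr => r hr; apply: c2; apply/eqP => e; by rewrite e ltnn in hr.
  have c0 : 0 <= c by rewrite /c divr_ge0 // ?mulr_ge0 // ltW.
  apply: ler_wpM2r; first exact/ltW/heta'.
  apply: le_trans (sum_pred_mono (F := fun _ => c) (k := s) (k' := m) (ltnW (ltn_ord s)) (fun _ => c0)) _.
  rewrite (eq_bigl xpredT); last by move=> r; exact: ltn_ord.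
  by rewrite sumr_const card_ord mulr_natl.
rewrite -eQ eE -/a.
under eq_bigr do rewrite /Bnd eN eB.
rewrite -mulr_sumr big_split /= -mulr_sumr S1.
set E := \sum_(s < m) eta s.+1.
have E0 : 0 <= E by rewrite /E sumr_ge0 // => s _; exact/ltW/heta'.
have a0 : 0 <= a by exact: sqrtr_ge0.
set B := \sum_(I : {ffun 'I_m -> 'I_n}) _ in S2 *.
apply: le_trans (_ : _ <= 2 * L * (a * (m%:R * (n%:R ^+ m / n%:R)) +
   m%:R * (n%:R ^+ m / (n%:R * n%:R)) * E)) _.
  by rewrite ler_wpM2l ?mulr_ge0 // lerD2l.
set K := L * (m%:R / n%:R * (a + n%:R^-1 * E) * n%:R ^+ m).
have K0 : 0 <= K.
  rewrite /K mulr_ge0 // mulr_ge0 // ?mulr_ge0 // ?divr_ge0 ?addr_ge0 ?mulr_ge0 ?invr_ge0 //;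
  try lra.
have -> : 2 * L * (a * (m%:R * (n%:R ^+ m / n%:R)) + m%:R * (n%:R ^+ m / (n%:R * n%:R)) * E)
   = 2 * K.
  rewrite /K; field; lra.
have -> : 3 * L * (m%:R / n%:R) * (a + n%:R^-1 * E) * n%:R ^+ m = 3 * K.
  by rewrite /K; ring.
lra.
Qed.
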